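(* The family $\mathcal{P}$ of pdCGs on the vertex set $V$, equipped with the twin order $\preceq_t$, is a complete distributive lattice. For $\mathcal{G},\mathcal{H}\in\mathcal{P}$ with quadruplet representations $\mathcal{G}=(V,E_{\mathcal{G}},\mathbb{L}_{\mathcal{G}},\mathbb{E}_{\mathcal{G}})$, $\mathcal{H}=(V,E_{\mathcal{H}},\mathbb{L}_{\mathcal{H}},\mathbb{E}_{\mathcal{H}})$: (i) the meet is $\mathcal{G}\wedge_t\mathcal{H}=(V,\,E_{\mathcal{G}}\cap E_{\mathcal{H}},\,\mathbb{L}_{\mathcal{G}}\cap\mathbb{L}_{\mathcal{H}},\,\mathbb{E}_{\mathcal{G}}\cap\mathbb{E}_{\mathcal{H}})$; (ii) the join is $\mathcal{G}\vee_t\mathcal{H}=(V,\,E_{\mathcal{G}}\cup E_{\mathcal{H}},\,\mathbb{L}_{\mathcal{G}}\cup\mathbb{L}_{\mathcal{H}},\,\mathbb{E}_{\mathcal{G}}\cup\mathbb{E}_{\mathcal{H}})$. Furthermore, the maximum element is $\hat 1=(V,F_V,L,F_L)$ (the complete graph with all colour classes atomic) and the minimum element is $\hat 0=(V,\emptyset,\emptyset,\emptyset)$ (the graph with no edges in which all vertices belong to twin-pairing classes).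
   Context: Let $V=\{1,\dots,p\}$ and let $\tau:V\to V$ be a twin-pairing function: $\tau(i)=j$ implies $\tau(j)=i$, and there is a partition $V=L\cup R$, $L\cap R=\emptyset$, with $\tau(L)=R$; vertices are numbered so that $L=\{1,\dots,q\}$, $R=\{q+1,\dots,p\}$. Let $F_V=\{(i,j)\mid i,j\in V,\ i<j\}$; extend $\tau$ to edges by $\tau(i,j)=(\tau(i),\tau(j))$ (endpoints reordered to lie in $F_V$) and to sets elementwise. Let $F_L=\{(i,j)\in F_V\mid i<\tau(j)\}$, $F_R=\{(i,j)\in F_V\mid i>\tau(j)\}$. A coloured graph is a pair $(\mathcal{V},\mathcal{E})$ with $\mathcal{V}$ a partition of $V$ and $\mathcal{E}$ a partition of an edge set $E\subseteq F_V$. A colour class is atomic if it has one element and twin-pairing if it is $\{i,\tau(i)\}$ or $\{(i,j),\tau(i,j)\}$ with $(i,j)\neq\tau(i,j)$. A pdCG is a coloured graph all of whose classes are atomic or twin-pairing; $\mathcal{P}$ is the set of pdCGs on $V$. Each pdCG $\mathcal{G}=(\mathcal{V},\mathcal{E})$ is identified with its quadruplet $(V,E_{\mathcal{G}},\mathbb{L}_{\mathcal{G}},\mathbb{E}_{\mathcal{G}})$, where $E_{\mathcal{G}}$ is its edge set, $\mathbb{L}_{\mathcal{G}}=\{i\in L\mid\{i\}\in\mathcal{V}\}$, and $\mathbb{E}_{\mathcal{G}}=\{(i,j)\in E_L\cap\tau(E_R)\mid\{(i,j)\}\in\mathcal{E}\}$ with $E_L=E_{\mathcal{G}}\cap F_L$,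 $E_R=E_{\mathcal{G}}\cap F_R$; this identification is a bijection between $\mathcal{P}$ and the quadruplets $(V,E,\mathbb{L},\mathbb{E})$ with $E\subseteq F_V$, $\mathbb{L}\subseteq L$, $\mathbb{E}\subseteq (E\cap F_L)\cap\tau(E\cap F_R)$. The twin order: $\mathcal{H}\preceq_t\mathcal{G}$ iff $E_{\mathcal{H}}\subseteq E_{\mathcal{G}}$, $\mathbb{L}_{\mathcal{H}}\subseteq\mathbb{L}_{\mathcal{G}}$ and $\mathbb{E}_{\mathcal{H}}\subseteq\mathbb{E}_{\mathcal{G}}$. *)

(* Defs.v *)
(* Vertices V = {1..p} are modelled by 'I_p = {0..p-1}
   (shift by one), L = {0..q-1}, R = {q..p-1}. *)
From mathcomp Require Import all_boot.
Set Implicit Arguments. Unset Strict Implicit. Unset Printing Implicit Defensive.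

Section PDCG.
Variables (p q : nat) (tau : 'I_p -> 'I_p).

Definition Lset : {set 'I_p} := [set i : 'I_p | (nat_of_ord i < q)%N].
Definition Rset : {set 'I_p} := [set i : 'I_p | (q <= nat_of_ord i)%N].

Definition FV : {set 'I_p * 'I_p} := [set e : 'I_p * 'I_p | (nat_of_ord e.1 < nat_of_ord e.2)%N].

Definition tauE (e : 'I_p * 'I_p) : 'I_p * 'I_p :=
  if (nat_of_ord (tau e.1) < nat_of_ord (tau e.2))%N then (tau e.1, tau e.2) else (tau e.2, tau e.1).

Definition FL : {set 'I_p * 'I_p} := [set e in FV | (nat_of_ord e.1 < nat_of_ord (tau e.2))%N].
Definition FR : {set 'I_p * 'I_p} := [set e in FV | (nat_of_ord (tau e.2) < nat_of_ord e.1)%N].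

(* a (candidate) coloured graph: a vertex partition and an edge partition *)
Definition cgraph := ({set {set 'I_p}} * {set {set ('I_p * 'I_p)}})%type.

Definition is_cgraph (G : cgraph) : bool :=
  [&& partition G.1 [set: 'I_p], partition G.2 (cover G.2) & cover G.2 \subset FV].

Definition atomic (T : finType) (C : {set T}) : bool := #|C| == 1.
Definition vtwin (C : {set 'I_p}) : bool := [exists i, C == [set i; tau i]].
Definition etwin (C : {set 'I_p * 'I_p}) : bool :=
  [exists e, (C == [set e; tauE e]) && (e != tauE e)].

Definition is_pdCG (G : cgraph) : bool :=
  [&& is_cgraph G,
      [forall C in G.1, atomic C || vtwin C] &
      [forall C in G.2, atomic C || etwin C]].

Definition pdCGs : {set cgraph} := [set G | is_pdCG G].

Definition E_of (G : cgraph) : {set 'I_p * 'I_p} := cover G.2.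
Definition LL_of (G : cgraph) : {set 'I_p} := [set i in Lset | [set i] \in G.1].
Definition EE_of (G : cgraph) : {set 'I_p * 'I_p} :=
  [set e in (E_of G :&: FL) :&: (tauE @: (E_of G :&: FR)) | [set e] \in G.2].

Definition twin_le (G H : cgraph) : bool :=
  [&& E_of G \subset E_of H, LL_of G \subset LL_of H & EE_of G \subset EE_of H].

End PDCG.

Section OrderNotions.
Variables (T : finType) (P : {set T}) (le : rel T).

Definition is_partial_order_on : Prop :=
  [/\ forall x, x \in P -> le x x,
      forall x y, x \in P -> y \in P -> le x y -> le y x -> x = y &
      forall x y z, x \in P -> y \in P -> z \in P -> le x y -> le y z -> le x z].

Definition is_lub (S : {set T}) (x : T) : Prop :=
  [/\ x \in P, forall y, y \in S -> le y x &
      forall z, z \in P -> (forall y, y \in S -> le y z) -> le x z].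

Definition is_glb (S : {set T}) (x : T) : Prop :=
  [/\ x \in P, forall y, y \in S -> le x y &
      forall z, z \in P -> (forall y, y \in S -> le z y) -> le z x].

Definition is_complete_lattice_on : Prop :=
  is_partial_order_on /\
  forall S : {set T}, S \subset P -> (exists x, is_lub S x) /\ (exists x, is_glb S x).

Definition is_distributive_on : Prop :=
  forall x y z yz xyz xy xz r,
    x \in P -> y \in P -> z \in P ->
    is_lub [set y; z] yz -> is_glb [set x; yz] xyz ->
    is_glb [set x; y] xy -> is_glb [set x; z] xz -> is_lub [set xy; xz] r ->
    xyz = r.
End OrderNotions.

(* Main.v *)
Require Import Defs.
From mathcomp Require Import all_boot zify.
Set Implicit Arguments. Unset Strict Implicit. Unset Printing Implicit Defensive.

Section Main.
Variables (p q : nat) (tau : 'I_p -> 'I_p).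
Hypothesis tauK : involutive tau.
Hypothesis tau_LR : tau @: Lset p q = Rset p q.

Local Notation FVs := (FV p).
Local Notation FLs := (FL tau).
Local Notation FRs := (FR tau).
Local Notation tE := (tauE tau).
Local Notation Ls := (Lset p q).
Implicit Types (E EE : {set 'I_p * 'I_p}) (LL : {set 'I_p}).
Implicit Types (S : {set cgraph p}).


Lemma tau_inj : injective tau. Proof. exact: inv_inj. Qed.

Lemma tauLR i : (tau i < q) = (q <= i).
Proof.
case: (ltnP i q) => hi.
  have : tau i \in Rset p q by rewrite -tau_LR imset_f // inE.
  by rewrite inE ltnNge => ->.
have : i \in Rset p q by rewrite inE.
by rewrite -tau_LR => /imsetP [j]; rewrite inE => jq ->; rewrite tauK.
Qed.

Lemma tau_neq i : tau i != i.
Proof. apply/negP => /eqP h; have := tauLR i; rewrite h; lia. Qed.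

Lemma eq_tau (x y : 'I_p) : (val x == val (tau y)) = (val (tau x) == val y).
Proof.
apply/eqP/eqP => [/val_inj ->|/val_inj <-]; by rewrite tauK.
Qed.

Lemma eq_tau2 (x y : 'I_p) : (val (tau x) == val (tau y)) = (val x == val y).
Proof.
apply/eqP/eqP => [/val_inj /tau_inj -> //|/val_inj -> //].
Qed.

Lemma tauE_FV e : e \in FVs -> tE e \in FVs.
Proof.
case: e => a b; rewrite /tauE !inE /= => ab.
have := eq_tau2 a b; case: ifP => //= h1 h2.
lia.
Qed.

Lemma tauEK e : e \in FVs -> tE (tE e) = e.
Proof.
case: e => a b; rewrite /tauE !inE /= => ab.
have := eq_tau2 a b; case h1: (tau a < tau b) => /= H; rewrite ?tauK; case: ifP => h2 //; lia.
Qed.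

Lemma FLR_tE e : e \in FVs -> tE e != e ->
  ((e \in FLs) = (tE e \in FRs)) /\ ((e \in FRs) = (tE e \in FLs)).
Proof.
move=> eF; have tF := tauE_FV eF; move: eF tF.
case: e => a b; rewrite /tauE /FL /FR !inE /= => ab.
have := tauLR a; have := tauLR b; have := eq_tau a b; have := eq_tau b a;
have := eq_tau2 a b.
case: ifP => h1 /= H1 H2 H3 H4 H5; rewrite ?tauK /= => tF ne;
  rewrite xpair_eqE -!val_eqE /= in ne; split; lia.
Qed.

Lemma FLR_or e : e \in FVs -> tE e != e -> (e \in FLs) || (e \in FRs).
Proof.
case: e => a b; rewrite /tauE /FL /FR !inE /= => ab.
have := eq_tau a b; have := eq_tau b a; have := eq_tau2 a b.
case: ifP => h1 /= H1 H2 H3 ne; rewrite xpair_eqE -!val_eqE /= in ne; lia.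
Qed.

Lemma FLR_dis e : e \in FLs -> (e \in FRs) = false.
Proof. rewrite /FL /FR !inE; lia. Qed.


Lemma set2_neq (T : finType) (a b : T) : a != b -> ([set a; b] != [set a]) && ([set a; b] != [set b]).
Proof.
move=> ab; apply/andP; split; apply/negP => /eqP h;
  have := cards2 a b; rewrite h cards1 ab //.
Qed.

Lemma ep_eq (T : finType) (R R' : rel T) (D : {set T}) :
  {in D &, R =2 R'} -> equivalence_partition R D = equivalence_partition R' D.
Proof.
move=> H; apply: eq_in_imset => x Dx; apply/setP => y; rewrite !inE.
by case Dy: (y \in D) => //=; rewrite H.
Qed.

Lemma ep_pblock (T : finType) (R : rel T) (D : {set T}) x :
  {in D & &, equivalence_rel R} -> x \in D ->
  pblock (equivalence_partition R D) x = [set y in D | R x y].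
Proof.
move=> eqR Dx; have [_ tiP _] := and3P (equivalence_partitionP eqR).
apply: def_pblock => //; first exact: imset_f.
by rewrite inE Dx (eqR x x x Dx Dx Dx).1.
Qed.

Lemma single_in (T : finType) (P : {set {set T}}) (D : {set T}) x :
  partition P D -> x \in D -> ([set x] \in P) = (pblock P x == [set x]).
Proof.
case/and3P => /eqP cP tiP _ Dx; apply/idP/eqP => [h|<-].
  exact: def_pblock (set11 x).
by apply: pblock_mem; rewrite cP.
Qed.

Lemma atomicE (T : finType) (C : {set T}) x : atomic C -> x \in C -> C = [set x].
Proof. by move=> /cards1P [z ->]; rewrite inE => /eqP ->. Qed.

Definition LLs (LL : {set 'I_p}) := [set i | (i \in LL) || (tau i \in LL)].
Definition Rv LL : rel 'I_p := fun i j => (j == i) || ((j == tau i) && (i \notin LLs LL)).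
Definition Re (E EE : {set 'I_p * 'I_p}) : rel ('I_p * 'I_p) :=
  fun x y => (y == x) || [&& y == tE x, tE x \in E, tE x != x, x \notin EE & tE x \notin EE].
Definition mk (E : {set 'I_p * 'I_p}) (LL : {set 'I_p}) (EE : {set 'I_p * 'I_p}) : cgraph p :=
  (equivalence_partition (Rv LL) setT, equivalence_partition (Re E EE) E).
Definition valid (E : {set 'I_p * 'I_p}) (LL : {set 'I_p}) (EE : {set 'I_p * 'I_p}) :=
  [&& E \subset FVs, LL \subset Ls, EE \subset E :&: FLs & [forall e in EE, tE e \in E]].

Lemma LLs_tau (LL : {set 'I_p}) i : (tau i \in LLs LL) = (i \in LLs LL).
Proof. by rewrite !inE tauK orbC. Qed.

Lemma Rv_equiv (LL : {set 'I_p}) : {in [set: 'I_p] & &, equivalence_rel (Rv LL)}.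
Proof.
move=> x y z _ _ _; split; first by rewrite /Rv eqxx.
rewrite /Rv => /orP [/eqP -> // | /andP [/eqP -> hx]].
by rewrite tauK LLs_tau hx !andbT orbC.
Qed.

Lemma Re_equiv (E EE : {set 'I_p * 'I_p}) : E \subset FVs -> {in E & &, equivalence_rel (Re E EE)}.
Proof.
move=> hE x y z xE _ _; split; first by rewrite /Re eqxx.
have xF : x \in FVs by apply: (subsetP hE).
rewrite /Re => /orP [/eqP -> // | /and5P [/eqP -> tE1 tE2 tE3 tE4]].
rewrite tauEK // xE tE1 tE3 tE4 eq_sym tE2 /= !andbT orbC.
by rewrite (eq_sym x (tE x)) tE2 andbT.
Qed.

Lemma class_v (LL : {set 'I_p}) i :
  [set y in [set: 'I_p] | Rv LL i y] = if i \in LLs LL then [set i] else [set i; tau i].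
Proof.
apply/setP => y; case: ifP => h; rewrite !inE /Rv h ?andbT ?andbF ?orbF //.
Qed.

Lemma class_e (E EE : {set 'I_p * 'I_p}) x : x \in E ->
  [set y in E | Re E EE x y] =
  if [&& tE x \in E, tE x != x, x \notin EE & tE x \notin EE] then [set x; tE x] else [set x].
Proof.
move=> xE; apply/setP => y; rewrite /Re; case: ifP => h; rewrite !inE.
  have tx : tE x \in E by case/and4P: h.
  rewrite andbT; case: (eqVneq y x) => [->|_]; first by rewrite xE.
  by case: (eqVneq y (tE x)) => [->|_]; rewrite ?tx ?andbF.
rewrite andbF orbF; case: (eqVneq y x) => [->|_]; by rewrite ?xE ?andbF.
Qed.


Lemma FL_neq e : (e \in FLs) || (e \in FRs) -> tE e != e.
Proof.
case: e => a b; rewrite /tauE /FL /FR !inE /=.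
have := eq_tau a b; have := eq_tau b a; have := eq_tau2 a b.
have T1 := tau_neq a; rewrite -val_eqE /= in T1.
case: ifP => h1 /= H1 H2 H3 hh; rewrite xpair_eqE -!val_eqE /=; lia.
Qed.

Lemma imtE (A : {set 'I_p * 'I_p}) e : A \subset FVs -> e \in FVs ->
  (e \in tE @: A) = (tE e \in A).
Proof.
move=> hA eF; apply/imsetP/idP => [[x xA ->]|h]; last by exists (tE e); rewrite ?tauEK.
by rewrite tauEK // (subsetP hA).
Qed.

Lemma FL_FV e : e \in FLs -> e \in FVs.
Proof. by rewrite /FL inE => /andP []. Qed.
Lemma FR_FV e : e \in FRs -> e \in FVs.
Proof. by rewrite /FR inE => /andP []. Qed.

Lemma mk_pdCG E LL EE : E \subset FVs -> mk E LL EE \in pdCGs tau.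
Proof.
move=> hE; rewrite inE /is_pdCG /is_cgraph /=.
have pV := equivalence_partitionP (Rv_equiv LL).
have pE := equivalence_partitionP (@Re_equiv E EE hE).
rewrite pV (cover_partition pE) pE hE /=.
apply/andP; split; apply/forallP => C; apply/implyP => /imsetP [x xD ->].
  rewrite class_v; case: ifP => h; first by rewrite /atomic cards1.
  by apply/orP; right; apply/existsP; exists x.
rewrite class_e //; case: ifP => h; last by rewrite /atomic cards1.
apply/orP; right; apply/existsP; exists x; rewrite eqxx eq_sym /=; by case/and4P: h.
Qed.

Lemma mk_E E LL EE : E \subset FVs -> E_of (mk E LL EE) = E.
Proof. move=> hE; exact: cover_partition (equivalence_partitionP (@Re_equiv E EE hE)). Qed.

Lemma mk_LL E LL EE : LL \subset Ls -> LL_of q (mk E LL EE) = LL.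
Proof.
move=> hL; have pV := equivalence_partitionP (Rv_equiv LL).
apply/setP => i; rewrite /LL_of inE /= (single_in pV (in_setT i)).
rewrite (ep_pblock (Rv_equiv LL) (in_setT i)) class_v.
have hn : i != tau i by rewrite eq_sym tau_neq.
have /andP [n1 _] := set2_neq hn.
case: ifP => h; rewrite ?eqxx ?(negbTE n1) ?andbT ?andbF.
  apply/idP/idP => [iL|/(subsetP hL) //]; move: h; rewrite inE.
  case/orP => // /(subsetP hL); move: iL; rewrite !inE tauLR; lia.
by move: h; rewrite inE; case: (i \in LL).
Qed.

Lemma mk_EE E LL EE : valid E LL EE -> EE_of tau (mk E LL EE) = EE.
Proof.
case/and4P => hE hL hEE /forall_inP hT.
have pE := equivalence_partitionP (@Re_equiv E EE hE).
apply/setP => e; rewrite /EE_of mk_E // inE.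
case eE: (e \in E); last first.
  rewrite !inE eE /=; apply/esym/negP => /(subsetP hEE); by rewrite inE eE.
have eF : e \in FVs by apply: (subsetP hE).
have EFR : E :&: FRs \subset FVs by apply: subset_trans (subsetIl _ _) hE.
rewrite (single_in pE eE) (ep_pblock (@Re_equiv E EE hE) eE) class_e //.
rewrite !in_setI eE imtE // in_setI.
case eEE: (e \in EE).
  have eFL : e \in FLs by move: (subsetP hEE e eEE); rewrite in_setI => /andP [].
  have ne := FL_neq (introT orP (or_introl eFL)).
  rewrite eFL hT //= !andbF eqxx andbT; by case: (FLR_tE eF ne) => <- _.
rewrite /=; apply/negP => /andP [/and3P [eFL tEE tFR]].
have ne := FL_neq (introT orP (or_introl eFL)).
have tEE' : tE e \notin EE.
  apply/negP => /(subsetP hEE); rewrite in_setI => /andP [_ h].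
  by rewrite FLR_dis in tFR.
rewrite tEE ne tEE' /=.
have ne' : e != tE e by rewrite eq_sym.
by have /andP [n1 _] := set2_neq ne'; rewrite (negbTE n1).
Qed.


Lemma pd_valid G : G \in pdCGs tau -> valid (E_of G) (LL_of q G) (EE_of tau G).
Proof.
rewrite inE => /and3P [/and3P [_ _ hE] _ _].
rewrite /valid hE /=; apply/and3P; split.
- by apply/subsetP => i; rewrite inE => /andP [].
- apply/subsetP => e; rewrite /EE_of inE in_setI => /andP [/andP [h _] _]; exact: h.
- apply/forall_inP => e; rewrite /EE_of inE in_setI => /andP [/andP [_ /imsetP [x]]].
  rewrite in_setI => /andP [xE xFR] -> _; rewrite tauEK //; exact: FR_FV.
Qed.

Lemma pd_mk G : G \in pdCGs tau -> G = mk (E_of G) (LL_of q G) (EE_of tau G).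
Proof.
case: G => G1 G2; rewrite inE => /and3P [/and3P [pV pE hE] /forall_inP hV /forall_inP hEc].
rewrite /= in pV pE hE hV hEc.
have [_ tiV _] := and3P pV; have [_ tiE _] := and3P pE.
have cV : cover G1 = setT := cover_partition pV.
rewrite /mk /E_of /=; congr pair.
  have vshape x : pblock G1 x = [set x] \/ pblock G1 x = [set x; tau x].
    have Px : pblock G1 x \in G1 by apply: pblock_mem; rewrite cV inE.
    have xP : x \in pblock G1 x by rewrite mem_pblock cV inE.
    case/orP: (hV _ Px) => [/atomicE/(_ xP) -> | /existsP [i /eqP hi]]; [by left | right].
    rewrite hi; move: xP; rewrite hi !inE => /orP [/eqP -> // | /eqP ->].
    by rewrite tauK setUC.
  have vsingle x : pblock G1 x = [set x] -> pblock G1 (tau x) = [set tau x].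
    move=> H; case: (vshape (tau x)) => // h; exfalso; rewrite tauK in h.
    have : x \in pblock G1 (tau x) by rewrite h !inE eqxx orbT.
    move/(same_pblock tiV); rewrite H h => /setP /(_ (tau x)).
    by rewrite !inE eqxx /= (negbTE (tau_neq x)).
  rewrite -{1}(equivalence_partition_pblock pV); apply: ep_eq => x y _ _.
  rewrite /Rv; case: (vshape x) => h; rewrite h ?in_set1 ?in_set2.
    have -> : x \in LLs (LL_of q (G1, G2)).
      rewrite !inE /=; case xL: (x < q).
        by rewrite -h pblock_mem // cV inE.
      by rewrite -(vsingle _ h) pblock_mem ?cV ?inE // tauLR leqNgt xL.
    by rewrite andbF orbF.
  have hn : x != tau x by rewrite eq_sym tau_neq.
  have /andP [n1 n2] := set2_neq hn.
  have -> : x \in LLs (LL_of q (G1, G2)) = false.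
    rewrite !inE /=; apply/norP; split; apply/nandP; right; apply/negP => H'.
      by have := def_pblock tiV H' (set11 x); rewrite h => /eqP; rewrite (negbTE n1).
    have := def_pblock tiV H' (set11 (tau x)).
    rewrite (@same_pblock _ _ (tau x) x tiV); last by rewrite h !inE eqxx orbT.
    by rewrite h => /eqP; rewrite (negbTE n2).
  by rewrite andbT.
have cE x : x \in cover G2 -> x \in FVs by move=> /(subsetP hE).
have eshape x : x \in cover G2 ->
   pblock G2 x = [set x] \/ (pblock G2 x = [set x; tE x] /\ tE x != x).
  move=> xc.
  have Px : pblock G2 x \in G2 by apply: pblock_mem.
  have xP : x \in pblock G2 x by rewrite mem_pblock.
  case/orP: (hEc _ Px) => [/atomicE/(_ xP) -> | /existsP [f /andP [/eqP hi nf]]]; [by left | right].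
  have fc : f \in cover G2.
    by apply/bigcupP; exists (pblock G2 x) => //; rewrite hi !inE eqxx.
  rewrite hi; move: xP; rewrite hi !inE => /orP [/eqP -> | /eqP ->]; first by rewrite eq_sym.
  by rewrite tauEK ?cE // setUC.
have esingle x : x \in cover G2 -> pblock G2 x = [set x] -> tE x \in cover G2 ->
    pblock G2 (tE x) = [set tE x].
  move=> xc H tc; case: (eshape (tE x) tc) => // [[h ne]]; exfalso.
  rewrite tauEK ?cE // in h ne.
  have : x \in pblock G2 (tE x) by rewrite h !inE eqxx orbT.
  move/(same_pblock tiE); rewrite H h => /setP /(_ (tE x)).
  by rewrite !inE eqxx /= eq_sym (negbTE ne).
have EFR : cover G2 :&: FRs \subset FVs by apply: subset_trans (subsetIl _ _) hE.
rewrite -{1}(equivalence_partition_pblock pE); apply: ep_eq => x y xc _.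
have xF := cE x xc.
rewrite /Re; case: (eshape x xc) => [h | [h ne]]; rewrite h ?in_set1 ?in_set2.
  suff -> : [&& tE x \in cover G2, tE x != x, x \notin EE_of tau (G1, G2)
            & tE x \notin EE_of tau (G1, G2)] = false by rewrite andbF orbF.
  apply/negP => /and4P [tc ne nx nt].
  have tF := tauE_FV xF.
  case/orP: (FLR_or xF ne) => [xFL | xFR].
    move/negP: nx; apply; rewrite /EE_of inE /= !in_setI xc xFL imtE // in_setI tc /=.
    case: (FLR_tE xF ne) => <- _; rewrite xFL /= -h pblock_mem //.
  move/negP: nt; apply; rewrite /EE_of inE /= !in_setI tc imtE // tauEK // in_setI xc xFR /=.
  case: (FLR_tE xF ne) => _ <-; rewrite xFR /= -(esingle x xc h tc) pblock_mem //.
have tc : tE x \in cover G2.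
  by apply/bigcupP; exists (pblock G2 x); [apply: pblock_mem | rewrite h !inE eqxx orbT].
have hn : x != tE x by rewrite eq_sym.
have /andP [n1 n2] := set2_neq hn.
have -> : x \in EE_of tau (G1, G2) = false.
  rewrite /EE_of inE /=; apply/nandP; right; apply/negP => H'.
  by have := def_pblock tiE H' (set11 x); rewrite h => /eqP; rewrite (negbTE n1).
have -> : tE x \in EE_of tau (G1, G2) = false.
  rewrite /EE_of inE /=; apply/nandP; right; apply/negP => H'.
  have := def_pblock tiE H' (set11 (tE x)).
  rewrite (@same_pblock _ _ (tE x) x tiE); last by rewrite h !inE eqxx orbT.
  by rewrite h => /eqP; rewrite (negbTE n2).
by rewrite tc ne !andbT.
Qed.


Local Notation P := (pdCGs tau).
Local Notation le := (twin_le q tau).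

Lemma antisym G H : G \in P -> H \in P -> le G H -> le H G -> G = H.
Proof.
move=> GP HP /and3P [a b c] /and3P [d e f].
apply: (etrans (pd_mk GP)); apply: esym; apply: (etrans (pd_mk HP)).
by congr mk; apply/eqP; rewrite eqEsubset ?a ?b ?c ?d ?e ?f.
Qed.

Lemma bigcup2 (I T : finType) (F : I -> {set T}) a b :
  \bigcup_(i in [set a; b]) F i = F a :|: F b.
Proof.
apply/setP => x; apply/bigcupP/setUP => [[i /set2P [->|->] h]|[h|h]]; [left|right|exists a|exists b];
  rewrite ?set21 ?set22 //.
Qed.

Lemma bigcap2 (I T : finType) (F : I -> {set T}) a b :
  \bigcap_(i in [set a; b]) F i = F a :&: F b.
Proof.
apply/setP => x; rewrite inE; apply/bigcapP/andP => [h|[h1 h2] i /set2P [->|->]] //.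
by split; apply: h; rewrite ?set21 ?set22.
Qed.

Definition Eu (S : {set cgraph p}) := \bigcup_(G in S) E_of G.
Definition LLu (S : {set cgraph p}) := \bigcup_(G in S) LL_of q G.
Definition EEu (S : {set cgraph p}) := \bigcup_(G in S) EE_of tau G.
Definition Eg (S : {set cgraph p}) := FVs :&: \bigcap_(G in S) E_of G.
Definition LLg (S : {set cgraph p}) := Ls :&: \bigcap_(G in S) LL_of q G.
Definition EEg (S : {set cgraph p}) := FLs :&: \bigcap_(G in S) EE_of tau G.

Lemma lub_valid S : S \subset P -> valid (Eu S) (LLu S) (EEu S).
Proof.
move=> SP; have V G : G \in S -> valid (E_of G) (LL_of q G) (EE_of tau G).
  by move=> GS; apply: pd_valid; apply: (subsetP SP).
apply/and4P; split.
- by apply/bigcupsP => G /V /and4P [].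
- by apply/bigcupsP => G /V /and4P [].
- apply/subsetP => e /bigcupP [G GS eG]; have /and4P [_ _ h _] := V G GS.
  move: (subsetP h e eG); rewrite !in_setI => /andP [eE ->]; rewrite andbT.
  by apply/bigcupP; exists G.
- apply/forall_inP => e /bigcupP [G GS eG]; have /and4P [_ _ _ /forall_inP h] := V G GS.
  by apply/bigcupP; exists G => //; apply: h.
Qed.

Lemma glb_valid S : S \subset P -> valid (Eg S) (LLg S) (EEg S).
Proof.
move=> SP; have V G : G \in S -> valid (E_of G) (LL_of q G) (EE_of tau G).
  by move=> GS; apply: pd_valid; apply: (subsetP SP).
apply/and4P; split; try exact: subsetIl.
- apply/subsetP => e; rewrite /EEg /Eg in_setI => /andP [eFL /bigcapP h].
  rewrite !in_setI (FL_FV eFL) eFL andbT /=; apply/bigcapP => G GS.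
  have /and4P [_ _ h3 _] := V G GS.
  by move: (subsetP h3 e (h G GS)); rewrite in_setI => /andP [].
- apply/forall_inP => e; rewrite /EEg /Eg in_setI => /andP [eFL /bigcapP h].
  rewrite in_setI tauE_FV ?FL_FV //=; apply/bigcapP => G GS.
  have /and4P [_ _ _ /forall_inP h4] := V G GS; exact: h4 _ (h G GS).
Qed.

Lemma lub_ok S : S \subset P -> is_lub P le S (mk (Eu S) (LLu S) (EEu S)).
Proof.
move=> SP; have V := lub_valid SP; case/and4P: (V) => hE hL _ _.
split; first exact: mk_pdCG.
  move=> y yS; rewrite /twin_le mk_E // mk_LL // mk_EE //.
  by apply/and3P; split; apply: (bigcup_sup y yS).
move=> z zP H; rewrite /twin_le mk_E // mk_LL // mk_EE //.
by apply/and3P; split; apply/bigcupsP => G GS; case/and3P: (H G GS).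
Qed.

Lemma glb_ok S : S \subset P -> is_glb P le S (mk (Eg S) (LLg S) (EEg S)).
Proof.
move=> SP; have V := glb_valid SP; case/and4P: (V) => hE hL _ _.
split; first exact: mk_pdCG.
  move=> y yS; rewrite /twin_le mk_E // mk_LL // mk_EE //.
  by apply/and3P; split; apply: subset_trans (subsetIr _ _) (bigcap_inf y yS).
move=> z zP H; rewrite /twin_le mk_E // mk_LL // mk_EE //.
case/and4P: (pd_valid zP) => h1 h2 h3 _.
apply/and3P; split; rewrite subsetI ?h1 ?h2 ?(subset_trans h3 (subsetIr _ _)) /=;
  by apply/bigcapsP => G GS; case/and3P: (H G GS).
Qed.

Lemma lub_unique S x : S \subset P -> is_lub P le S x -> x = mk (Eu S) (LLu S) (EEu S).
Proof.
move=> SP [xP xub xl]; have [uP uub ul] := lub_ok SP.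
by apply: antisym => //; [apply: xl | apply: ul].
Qed.

Lemma glb_unique S x : S \subset P -> is_glb P le S x -> x = mk (Eg S) (LLg S) (EEg S).
Proof.
move=> SP [xP xub xl]; have [uP uub ul] := glb_ok SP.
by apply: antisym => //; [apply: ul | apply: xl].
Qed.

Lemma s2 a b : a \in P -> b \in P -> [set a; b] \subset P.
Proof. by move=> aP bP; apply/subsetP => x /set2P [->|->]. Qed.

Lemma lub2 a b x : a \in P -> b \in P -> is_lub P le [set a; b] x ->
  [/\ E_of x = E_of a :|: E_of b, LL_of q x = LL_of q a :|: LL_of q b &
      EE_of tau x = EE_of tau a :|: EE_of tau b].
Proof.
move=> aP bP H; have SP := s2 aP bP; have V := lub_valid SP.
case/and4P: (V) => hE hL _ _.
by rewrite (lub_unique SP H) mk_E // mk_LL // mk_EE // /Eu /LLu /EEu !bigcup2.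
Qed.

Lemma glb2 a b x : a \in P -> b \in P -> is_glb P le [set a; b] x ->
  [/\ E_of x = E_of a :&: E_of b, LL_of q x = LL_of q a :&: LL_of q b &
      EE_of tau x = EE_of tau a :&: EE_of tau b].
Proof.
move=> aP bP H; have SP := s2 aP bP; have V := glb_valid SP.
case/and4P: (V) => hE hL _ _.
rewrite (glb_unique SP H) mk_E // mk_LL // mk_EE // /Eg /LLg /EEg !bigcap2.
case/and4P: (pd_valid aP) => h1 h2 h3 _.
have h3' : EE_of tau a \subset FLs := subset_trans h3 (subsetIr _ _).
split; apply/setIidPr; apply: subset_trans (subsetIl _ _) _; done.
Qed.


Lemma main_thm :
  let P := pdCGs tau in
  let le := twin_le q tau in
  [/\ is_complete_lattice_on P le /\ is_distributive_on P le,
      (forall G H, G \in P -> H \in P ->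
         exists M, [/\ is_glb P le [set G; H] M,
                      E_of M = E_of G :&: E_of H,
                      LL_of q M = LL_of q G :&: LL_of q H &
                      EE_of tau M = EE_of tau G :&: EE_of tau H]),
      (forall G H, G \in P -> H \in P ->
         exists J, [/\ is_lub P le [set G; H] J,
                      E_of J = E_of G :|: E_of H,
                      LL_of q J = LL_of q G :|: LL_of q H &
                      EE_of tau J = EE_of tau G :|: EE_of tau H]),
      (exists T, [/\ T \in P, (forall G, G \in P -> le G T),
                    E_of T = FV p, LL_of q T = Lset p q & EE_of tau T = FL tau]) &
      (exists B, [/\ B \in P, (forall G, G \in P -> le B G),
                    E_of B = set0, LL_of q B = set0 & EE_of tau B = set0])].
Proof.
move=> /=; split.
- split; first split.
  + split.
    * by move=> x _; apply/and3P; split; apply: subxx.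
    * exact: antisym.
    * move=> x y z _ _ _ /and3P [a b c] /and3P [d e f]; apply/and3P; split;
        by [apply: subset_trans a d | apply: subset_trans b e | apply: subset_trans c f].
  + by move=> S SP; split; eexists; [apply: lub_ok | apply: glb_ok].
  + move=> x y z yz xyz xy xz r xP yP zP Hyz Hxyz Hxy Hxz Hr.
    have yzP : yz \in P by case: Hyz.
    have xyP : xy \in P by case: Hxy.
    have xzP : xz \in P by case: Hxz.
    have xyzP : xyz \in P by case: Hxyz.
    have rP : r \in P by case: Hr.
    have [e1 l1 ee1] := lub2 yP zP Hyz.
    have [e2 l2 ee2] := glb2 xP yzP Hxyz.
    have [e3 l3 ee3] := glb2 xP yP Hxy.
    have [e4 l4 ee4] := glb2 xP zP Hxz.
    have [e5 l5 ee5] := lub2 xyP xzP Hr.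
    apply: (etrans (pd_mk xyzP)); apply: esym; apply: (etrans (pd_mk rP)).
    by congr mk; rewrite ?e2 ?e1 ?e5 ?e3 ?e4 ?l2 ?l1 ?l5 ?l3 ?l4 ?ee2 ?ee1 ?ee5 ?ee3 ?ee4 setIUr.
- move=> G H GP HP; have Hg := glb_ok (s2 GP HP).
  have [e l ee] := glb2 GP HP Hg; by eexists; split; [exact: Hg|..].
- move=> G H GP HP; have Hg := lub_ok (s2 GP HP).
  have [e l ee] := lub2 GP HP Hg; by eexists; split; [exact: Hg|..].
- have V : valid FVs Ls FLs.
    rewrite /valid !subxx /=; apply/andP; split.
      by apply/subsetP => e eFL; rewrite in_setI FL_FV.
    by apply/forall_inP => e eFL; apply: tauE_FV; apply: FL_FV.
  exists (mk FVs Ls FLs); rewrite mk_E ?mk_LL ?mk_EE ?subxx //; split => //.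
    exact: mk_pdCG.
  move=> G GP; case/and4P: (pd_valid GP) => h1 h2 h3 _.
  by rewrite /twin_le mk_E ?mk_LL ?mk_EE ?subxx // h1 h2 (subset_trans h3 (subsetIr _ _)).
- have V : valid set0 set0 set0.
    by rewrite /valid !sub0set /=; apply/forall_inP => e; rewrite inE.
  exists (mk set0 set0 set0); rewrite mk_E ?mk_LL ?mk_EE ?sub0set //; split => //.
    by apply: mk_pdCG; rewrite sub0set.
  move=> G GP.
  by rewrite /twin_le mk_E ?mk_LL ?mk_EE ?sub0set.
Qed.

End Main.

Theorem theorem6 (p q : nat) (tau : 'I_p -> 'I_p)
    (tau_inv : involutive tau)
    (tau_LR : tau @: Lset p q = Rset p q) :
  let P := pdCGs tau in
  let le := twin_le q tau in
  [/\ is_complete_lattice_on P le /\ is_distributive_on P le,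
      (* (i) meet *)
      (forall G H, G \in P -> H \in P ->
         exists M, [/\ is_glb P le [set G; H] M,
                      E_of M = E_of G :&: E_of H,
                      LL_of q M = LL_of q G :&: LL_of q H &
                      EE_of tau M = EE_of tau G :&: EE_of tau H]),
      (* (ii) join *)
      (forall G H, G \in P -> H \in P ->
         exists J, [/\ is_lub P le [set G; H] J,
                      E_of J = E_of G :|: E_of H,
                      LL_of q J = LL_of q G :|: LL_of q H &
                      EE_of tau J = EE_of tau G :|: EE_of tau H]),
      (* maximum element 1 = (V, F_V, L, F_L), all classes atomic *)
      (exists T, [/\ T \in P, (forall G, G \in P -> le G T),
                    E_of T = FV p, LL_of q T = Lset p q & EE_of tau T = FL tau]) &
      (* minimum element 0 = (V, empty, empty, empty) *)
      (exists B, [/\ B \in P, (forall G, G \in P -> le B G),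
                    E_of B = set0, LL_of q B = set0 & EE_of tau B = set0])].
Proof. exact: main_thm. Qed.
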